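(* Let $A$ and $d$ be positive integers with $d<A-1$, and let $r$ be the maximum number of distinct preferences over $A$ alternatives that are simultaneously representable in a $d$-dimensional Euclidean preference model. Let $\ell$ be the number of unique preferences in a given profile and suppose $\ell\geq r$. Label the alternatives $a_1,\dots,a_A$, let $M=A-d$, and for $n\in\{1,\dots,M-1\}$ let $E_n$ be the event that a uniformly random strict ordering of $a_1,\dots,a_A$ places $a_n$ within its first $M-n$ positions. Let $C=\bigcup_{n=1}^{M-1} E_n$. Then $$r \leq \hat{r} = \left(1-\mathbb{P}(C)\right) A!.$$
   Context: A preference is a strict total order on the alternatives. A set of preferences $\{>_1,\dots,>_m\}$ over alternatives $a_1,\dots,a_A$ is simultaneously representable in a $d$-dimensional Euclidean preference model if there exist points $x^{a}\in\mathbb{R}^d$ for each alternative $a$ and $w^{i}\in\mathbb{R}^d$ for each $i\in\{1,\dots,m\}$ such that for all alternatives $a,b$ and all $i$, $a>_i b \iff \|x^a-w^i\|<\|x^b-w^i\|$ (standard Euclidean norm). A profile is an assignment of preferences to a population of individuals; its number of unique preferences is the number of distinct preferences it contains. *)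

(* Defs.v *)
From HB Require Import structures.
From mathcomp Require Import all_boot all_order all_algebra all_fingroup.
From mathcomp Require Import reals.
Set Implicit Arguments. Unset Strict Implicit. Unset Printing Implicit Defensive.
Import Order.TTheory GRing.Theory Num.Theory.
Local Open Scope ring_scope.

(* A preference over the alternatives 'I_A (alternative a_{i+1} is i) is
   encoded by its rank permutation s : {perm 'I_A}:  s a = position of a
   (0 = most preferred), and  a >_s b  iff  s a < s b. *)
Definition prefers (A : nat) (s : {perm 'I_A}) (a b : 'I_A) : bool := (s a < s b)%N.

Definition enorm (R : realType) (d : nat) (v : 'rV[R]_d) : R :=
  Num.sqrt (\sum_(k < d) (v ord0 k) ^+ 2).

Definition representable (R : realType) (A d : nat) (S : {set {perm 'I_A}}) : Prop :=
  exists (x : 'I_A -> 'rV[R]_d) (w : {perm 'I_A} -> 'rV[R]_d),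
    forall s, s \in S -> forall a b : 'I_A,
      prefers s a b <-> enorm (x a - w s) < enorm (x b - w s).

Definition is_max_representable (R : realType) (A d r : nat) : Prop :=
  (exists S : {set {perm 'I_A}}, representable R d S /\ #|S| = r) /\
  (forall S : {set {perm 'I_A}}, representable R d S -> (#|S| <= r)%N).

(* Event C = union of E_n, n = 1..M-1, with M = A - d: E_n = the ordering places
   a_n (ordinal n-1) within its first M - n positions. *)
Definition event_C (A d : nat) : {set {perm 'I_A}} :=
  [set s : {perm 'I_A} | [exists i : 'I_A,
     (1 <= i.+1 <= (A - d) - 1)%N && (s i < (A - d) - i.+1)%N]].

Definition unif_prob (A : nat) (E : {set {perm 'I_A}}) : rat :=
  #|E|%:R / #|{perm 'I_A}|%:R.

Definition n_unique (A : nat) (P : seq {perm 'I_A}) : nat := size (undup P).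

(* Main.v *)
Require Import Defs.
From HB Require Import structures.
From mathcomp Require Import all_boot all_order all_algebra all_fingroup.
From mathcomp Require Import reals boolp.
From mathcomp Require Import ring lra zify.
Set Implicit Arguments. Unset Strict Implicit. Unset Printing Implicit Defensive.
Import Order.TTheory GRing.Theory Num.Theory.

Fixpoint pb (n d : nat) : nat := if n is m.+1 then minn d.+1 n * pb m d else 1.

Lemma pb0 n : pb n 0 = 1.
Proof. by elim: n => //= n ->; rewrite muln1 /minn; case: n. Qed.

Lemma pb_small n d : n <= d.+1 -> pb n d = n`!.
Proof.
elim: n => // n IH H /=; rewrite IH ?(ltnW H) // factS.
by congr (_ * _); apply/minn_idPr.
Qed.

Lemma pb_L n d : n * pb n d <= minn d.+1 n * pb n d.+1.
Proof.
elim: n => // n IH /=.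
rewrite mulnCA leq_mul2l; apply/orP; right.
case: (leqP n d) => Hnd.
  rewrite pb_small ?(leqW Hnd) // pb_small ?(leqW (leqW Hnd)) //.
  have -> : minn d.+2 n.+1 = n.+1 by apply/minn_idPr; lia.
  by [].
have E1 : minn d.+2 n.+1 = d.+2 by apply/minn_idPl; lia.
have E2 : minn d.+1 n = d.+1 by apply/minn_idPl; lia.
rewrite E1; rewrite E2 in IH.
have Hn : 0 < n by lia.
rewrite -(leq_pmul2l Hn).
apply: (leq_trans (_ : _ <= n.+1 * (d.+1 * pb n d.+1))).
  by rewrite mulnCA leq_mul2l IH orbT.
rewrite mulnA mulnA leq_mul2r; apply/orP; right; lia.
Qed.

Lemma pb_rec n d : pb n d.+1 + n * pb n d <= pb n.+1 d.+1.
Proof.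
rewrite /= (_ : minn d.+2 n.+1 = (minn d.+1 n).+1); last by lia.
by rewrite mulSn leq_add2l pb_L.
Qed.

Definition insf n (j0 : 'I_n.+1) (s : {perm 'I_n}) (i : 'I_n.+1) : 'I_n.+1 :=
  match unlift ord0 i with None => j0 | Some i' => lift j0 (s i') end.

Lemma insf_inj n (j0 : 'I_n.+1) (s : {perm 'I_n}) : injective (insf j0 s).
Proof.
move=> x y; rewrite /insf.
case: unliftP => [x' ->|->]; case: unliftP => [y' ->|->] //.
- by move/lift_inj/perm_inj => ->.
- by move=> E; have := neq_lift j0 (s x'); rewrite E eqxx.
- by move=> E; have := neq_lift j0 (s y'); rewrite -E eqxx.
Qed.

Definition ins n m (j : 'I_m) (s : {perm 'I_n}) : {perm 'I_n.+1} :=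
  perm (@insf_inj n (inord (n - j)) s).

Definition V n d := [set s : {perm 'I_n} | [forall i : 'I_n, n <= s i + i + d.+1]].

Lemma ins0 n m (j : 'I_m) s : ins j s ord0 = inord (n - j) :> 'I_n.+1.
Proof. by rewrite /ins permE /insf unlift_none. Qed.

Lemma insS n m (j : 'I_m) s i : ins j s (lift ord0 i) = lift (inord (n - j)) (s i) :> 'I_n.+1.
Proof. by rewrite /ins permE /insf liftK. Qed.

Lemma V_card n d : pb n d <= #|V n d|.
Proof.
elim: n => [|n IH].
  rewrite /= card_gt0; apply/set0Pn; exists 1%g; rewrite inE.
  by apply/forallP => -[].
pose f := fun p : 'I_(minn d.+1 n.+1) * {perm 'I_n} => ins p.1 p.2.
have finj : injective f.
  move=> [j s] [j' s'] /= E.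
  have E0 := congr1 (fun t : {perm 'I_n.+1} => val (t ord0)) E.
  rewrite /= !ins0 !inordK in E0; try lia.
  have Ej : j = j'.
    apply/val_inj; move: (ltn_ord j) (ltn_ord j') E0 => /= H1 H2 E0; lia.
  subst j'; congr (_, _); apply/permP => i.
  have := congr1 (fun t : {perm 'I_n.+1} => t (lift ord0 i)) E.
  by rewrite /= !insS => /lift_inj.
have sub : f @: setX [set: 'I_(minn d.+1 n.+1)] (V n d) \subset V n.+1 d.
  apply/subsetP => t /imsetP [[j s]]; rewrite inE /= => /andP [_ Hs] ->.
  rewrite inE; apply/forallP => i; rewrite /f /=.
  move: Hs; rewrite inE => /forallP Hs.
  case: (unliftP ord0 i) => [i' ->|->].
    rewrite insS /=; have := Hs i'; have := leq_addl (inord (n - j) <= s i') (s i').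
    rewrite /bump; lia.
  rewrite ins0 /= inordK; last by lia.
  move: (ltn_ord j); lia.
apply: leq_trans (subset_leq_card sub).
rewrite card_imset // cardsX cardsT card_ord /=.
by rewrite leq_mul2l IH orbT.
Qed.


Local Open Scope ring_scope.
Section Geo.
Variable R : realType.

Definition aff d := (R * 'rV[R]_d)%type.
Definition ev d (p : aff d) (w : 'rV[R]_d) : R := p.1 + \sum_k p.2 0 k * w 0 k.
Definition pat n d (F : 'I_n -> aff d) w : {ffun 'I_n * 'I_n -> bool} :=
  [ffun ab => ev (F ab.1) w < ev (F ab.2) w].
Definition gen n d (F : 'I_n -> aff d) w :=
  forall a b : 'I_n, a != b -> ev (F a) w != ev (F b) w.

Lemma ev_comb d (p : aff d) w1 w2 t :
  ev p ((1 - t) *: w1 + t *: w2) = (1 - t) * ev p w1 + t * ev p w2.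
Proof.
rewrite /ev.
have -> : \sum_k p.2 0 k * ((1 - t) *: w1 + t *: w2) 0 k =
   (1 - t) * \sum_k p.2 0 k * w1 0 k + t * \sum_k p.2 0 k * w2 0 k.
  rewrite !mulr_sumr -big_split; apply: eq_bigr => k _; rewrite !mxE /=; ring.
ring.
Qed.

Lemma ev_sub d (p q : aff d) w :
  ev p w - ev q w = ev (p.1 - q.1, p.2 - q.2) w.
Proof.
rewrite /ev /=.
have -> : \sum_k (p.2 - q.2) 0 k * w 0 k =
   \sum_k p.2 0 k * w 0 k - \sum_k q.2 0 k * w 0 k.
  rewrite -sumrB; apply: eq_bigr => k _; rewrite !mxE; ring.
ring.
Qed.

Lemma conv_lt (x1 y1 x2 y2 t : R) : x1 < y1 -> x2 < y2 -> 0 < t -> t < 1 ->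
  (1 - t) * x1 + t * x2 < (1 - t) * y1 + t * y2.
Proof.
move=> h1 h2 t0 t1.
by rewrite ltrD // ltr_pM2l // subr_gt0.
Qed.

Lemma ltNgen (x y : R) : x != y -> (x < y) = ~~ (y < x).
Proof. by case: ltgtP. Qed.

Lemma cross_pt m d (G : 'I_m -> aff d) (p q : aff d) w1 w2 :
  gen G w1 -> gen G w2 -> pat G w1 = pat G w2 ->
  ev q w1 < ev p w1 -> ev p w2 < ev q w2 ->
  exists w, [/\ gen G w, pat G w = pat G w1 & ev p w = ev q w].
Proof.
move=> g1 g2 Ep h1 h2.
set a1 := ev p w1 - ev q w1. set a2 := ev p w2 - ev q w2.
have a1p : 0 < a1 by rewrite subr_gt0.
have a2n : a2 < 0 by rewrite subr_lt0.
set t := a1 / (a1 - a2).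
have dp : 0 < a1 - a2 by lra.
have t0 : 0 < t by rewrite divr_gt0.
have t1 : t < 1 by rewrite ltr_pdivrMr // mul1r; lra.
exists ((1 - t) *: w1 + t *: w2).
have key : forall a c, ev (G a) w1 < ev (G c) w1 ->
    ev (G a) ((1 - t) *: w1 + t *: w2) < ev (G c) ((1 - t) *: w1 + t *: w2).
  move=> a c h; rewrite !ev_comb; apply: conv_lt => //.
  have := congr1 (fun P : {ffun 'I_m * 'I_m -> bool} => P (a, c)) Ep; rewrite !ffunE /= => <-; exact: h.
split.
- move=> a c ac; have := g1 a c ac; rewrite neq_lt => /orP [] /key h.
    by rewrite lt_eqF.
  by rewrite gt_eqF.
- apply/ffunP => -[a c]; rewrite !ffunE /=.
  case: (eqVneq a c) => [->|ac]; first by rewrite !ltxx.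
  have := g1 a c ac; rewrite neq_lt => /orP [] h.
    by rewrite h (key _ _ h).
  by rewrite (lt_gtF h) (lt_gtF (key _ _ h)).
- apply/eqP; rewrite -subr_eq0 !ev_comb.
  have -> : (1 - t) * ev p w1 + t * ev p w2 - ((1 - t) * ev q w1 + t * ev q w2)
     = a1 - t * (a1 - a2) by rewrite /a1 /a2; ring.
  by rewrite /t divfK ?subrr // gt_eqF.
Qed.

(* parametrization of a hyperplane *)
Definition param d' (c : R) (v : 'rV[R]_d'.+1) (k : 'I_d'.+1) (p : aff d'.+1) : aff d' :=
 (p.1 - p.2 0 k * c / v 0 k,
  \row_j (p.2 0 (lift k j) - p.2 0 k * v 0 (lift k j) / v 0 k)).

Lemma param_ev d' c (v : 'rV[R]_d'.+1) k p (w : 'rV[R]_d'.+1) : v 0 k != 0 ->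
  c + \sum_j v 0 j * w 0 j = 0 ->
  ev (param c v k p) (\row_j w 0 (lift k j)) = ev p w.
Proof.
move=> vk H; rewrite /ev /=.
rewrite (bigD1_ord k) //= in H; rewrite (bigD1_ord k) //=.
set Y := \sum_(i < d') v 0 (lift k i) * w 0 (lift k i) in H.
have -> : \sum_j (\row_j0 (p.2 0 (lift k j0) - p.2 0 k * v 0 (lift k j0) / v 0 k)) 0 j *
      (\row_j0 w 0 (lift k j0)) 0 j =
    \sum_(i < d') p.2 0 (lift k i) * w 0 (lift k i) - p.2 0 k / v 0 k * Y.
  rewrite /Y mulr_sumr -sumrB; apply: eq_bigr => j _; rewrite !mxE; ring.
have HY : Y = - c - v 0 k * w 0 k by lra.
rewrite HY; field; exact: vk.
Qed.


Definition realized n d (F : 'I_n -> aff d) (P : {ffun 'I_n * 'I_n -> bool}) :=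
  exists w, gen F w /\ pat F w = P.

Lemma pat_single n (F : 'I_n -> aff 0) (S : {set {ffun 'I_n * 'I_n -> bool}}) :
  (forall P, P \in S -> realized F P) -> (#|S| <= 1)%N.
Proof.
move=> HS; apply: (leq_trans (subset_leq_card (_ : S \subset [set pat F 0]))).
  by apply/subsetP => P /HS [w [_ <-]]; rewrite inE (thinmx0 w).
by rewrite cards1.
Qed.

Lemma main n : forall d (F : 'I_n -> aff d) (S : {set {ffun 'I_n * 'I_n -> bool}}),
  (forall P, P \in S -> realized F P) -> (#|S| <= pb n d)%N.
Proof.
elim: n => [|n IH] d F S HS.
  apply: leq_trans (max_card _) _.
  by rewrite card_ffun card_prod card_ord.
case: d F S HS => [|d] F S HS.
  by rewrite pb0; exact: pat_single HS.
case: (set_0Vmem S) => [->|[P0 HP0]]; first by rewrite cards0.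
have [w0 [g0 _]] := HS _ HP0.
pose z : 'I_n.+1 := ord_max.
pose F' := fun i : 'I_n => F (lift z i).
pose rho := fun P : {ffun 'I_n.+1 * 'I_n.+1 -> bool} =>
  [ffun ab : 'I_n * 'I_n => P (lift z ab.1, lift z ab.2)].
have pat_rho : forall w, rho (pat F w) = pat F' w.
  by move=> w; apply/ffunP => -[a b]; rewrite !ffunE.
have gen_rho : forall w, gen F w -> gen F' w.
  by move=> w g a b ab; apply: g; rewrite (inj_eq (@lift_inj _ z)).
pose cross := fun P' b => exists w,
  [/\ gen F' w, pat F' w = P' & ev (F z) w = ev (F (lift z b)) w].
pose K := fun P' => [set b | `[< cross P' b >]].
pose S' := rho @: S.
have HS' : forall P', P' \in S' -> realized F' P'.
  move=> P' /imsetP [P HP ->]; have [w [g <-]] := HS _ HP.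
  by exists w; split; [exact: gen_rho | rewrite pat_rho].
have fib_bound : forall P', (#|[set P in S | rho P == P']| <= (#|K P'|).+1)%N.
  move=> P'.
  set fib := [set P in S | rho P == P'].
  case: (set_0Vmem fib) => [->|[P1 HP1]]; first by rewrite cards0.
  pose D := fun P : {ffun 'I_n.+1 * 'I_n.+1 -> bool} => [set b : 'I_n | P (lift z b, z)].
  have real : forall P, P \in fib -> exists w, [/\ gen F w, pat F w = P & pat F' w = P'].
    move=> P; rewrite inE => /andP [/HS [w [g E]] /eqP Er].
    by exists w; split => //; rewrite -pat_rho E.
  have inD : forall P w, pat F w = P ->
      forall b, (b \in D P) = (ev (F (lift z b)) w < ev (F z) w).
    by move=> P w <- b; rewrite inE ffunE.
  have notD : forall P w, gen F w -> pat F w = P ->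
      forall b, (b \notin D P) = (ev (F z) w < ev (F (lift z b)) w).
    move=> P w g E b; rewrite (inD _ _ E).
    have nn : ev (F z) w != ev (F (lift z b)) w := g _ _ (neq_lift z b).
    by rewrite (ltNgen nn).
  have cr : forall Q1 Q2, Q1 \in fib -> Q2 \in fib -> D Q1 :\: D Q2 \subset K P'.
    move=> Q1 Q2 /real [w1 [g1 E1 F1]] /real [w2 [g2 E2 F2]].
    apply/subsetP => b; rewrite inE => /andP [nb2 b1].
    rewrite (notD _ _ g2 E2) in nb2; rewrite (inD _ _ E1) in b1.
    rewrite inE; apply/asboolP.
    have [w [gw pw ew]] :=
      cross_pt (gen_rho _ g1) (gen_rho _ g2) (etrans F1 (esym F2)) b1 nb2.
    by exists w; split => //; rewrite pw.
  have ch : forall Q1 Q2, Q1 \in fib -> Q2 \in fib ->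
      (D Q1 \subset D Q2) || (D Q2 \subset D Q1).
    move=> Q1 Q2 /real [w1 [g1 E1 F1]] /real [w2 [g2 E2 F2]].
    case: (boolP (D Q1 \subset D Q2)) => //= /subsetPn [b b1 nb2].
    apply/subsetP => c c2; apply: contraT => nc1.
    rewrite (inD _ _ E1) in b1; rewrite (notD _ _ g2 E2) in nb2.
    rewrite (inD _ _ E2) in c2; rewrite (notD _ _ g1 E1) in nc1.
    have h1 : ev (F' b) w1 < ev (F' c) w1 by apply: lt_trans b1 nc1.
    have h2 : ev (F' c) w2 < ev (F' b) w2 by apply: lt_trans c2 nb2.
    have := congr1 (fun P : {ffun 'I_n * 'I_n -> bool} => P (b, c)) (etrans F1 (esym F2)).
    by rewrite !ffunE /= h1 (lt_gtF h2).
  have inj : forall Q1 Q2, Q1 \in fib -> Q2 \in fib -> D Q1 = D Q2 -> Q1 = Q2.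
    move=> Q1 Q2 /real [w1 [g1 E1 F1]] /real [w2 [g2 E2 F2]] ED.
    have EF := etrans F1 (esym F2).
    have hD : forall b, (ev (F (lift z b)) w1 < ev (F z) w1) =
                        (ev (F (lift z b)) w2 < ev (F z) w2).
      by move=> b; rewrite -(inD _ _ E1) -(inD _ _ E2) ED.
    apply/ffunP => -[x y].
    rewrite -E1 -E2 !ffunE /=.
    case: (unliftP z x) => [x' ->|->]; case: (unliftP z y) => [y' ->|->].
    - by have := congr1 (fun P : {ffun 'I_n * 'I_n -> bool} => P (x', y')) EF; rewrite !ffunE.
    - exact: hD.
    - have n1 : ev (F z) w1 != ev (F (lift z y')) w1 := g1 _ _ (neq_lift z y').
      have n2 : ev (F z) w2 != ev (F (lift z y')) w2 := g2 _ _ (neq_lift z y').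
      by rewrite (ltNgen n1) (ltNgen n2) hD.
    - by rewrite !ltxx.
  have [Pm HPm Hmin] : exists2 Pm, Pm \in fib & forall P, P \in fib -> (#|D Pm| <= #|D P|)%N.
    by case: (@arg_minnP _ P1 (fun P => P \in fib) (fun P => #|D P|) HP1) => Pm HPm Hmin; exists Pm.
  have sub : forall P, P \in fib -> D Pm \subset D P.
    move=> P HP; case/orP: (ch _ _ HPm HP) => // h.
    have : D P == D Pm by rewrite eqEcard; apply/andP; split; [exact: h | exact: Hmin].
    by move/eqP => ->.
  have bnd : forall P, P \in fib -> (#|D P :\: D Pm| < (#|K P'|).+1)%N.
    by move=> P HP; rewrite ltnS subset_leq_card // cr.
  pose f := fun P => (inord #|D P :\: D Pm| : 'I_(#|K P'|).+1).
  have finj : {in fib &, injective f}.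
    move=> Q1 Q2 H1 H2 /(congr1 val); rewrite /f /= !inordK ?bnd // => Ec.
    have e1 : #|D Q1| = #|D Q2|.
      move: Ec; rewrite !cardsD (setIidPr (sub _ H1)) (setIidPr (sub _ H2)).
      have := subset_leq_card (sub _ H1); have := subset_leq_card (sub _ H2); lia.
    apply: inj => //; case/orP: (ch _ _ H1 H2) => h.
      by apply/eqP; rewrite eqEcard; apply/andP; split; [exact: h | rewrite e1].
    by apply/esym/eqP; rewrite eqEcard; apply/andP; split; [exact: h | rewrite e1].
  rewrite -(card_in_imset finj); apply: leq_trans (max_card _) _.
  by rewrite card_ord.
have T_bound : forall b, (#|[set P' in S' | b \in K P']| <= pb n d)%N.
  move=> b.
  pose c := (F z).1 - (F (lift z b)).1.
  pose v := (F z).2 - (F (lift z b)).2.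
  have evcv : forall w, ev (F z) w - ev (F (lift z b)) w = c + \sum_j v 0 j * w 0 j
    := fun w => ev_sub _ _ w.
  have hyp : forall w, ev (F z) w = ev (F (lift z b)) w -> c + \sum_j v 0 j * w 0 j = 0.
    by move=> w e; rewrite -evcv e subrr.
  case: (pickP (fun k => v 0 k != 0)) => [k /= vk | nv].
    pose G := fun a : 'I_n => param c v k (F' a).
    apply: (IH d G) => P'; rewrite inE => /andP [_]; rewrite inE => /asboolP [w [g pw ew]].
    have Hh := hyp w ew.
    have eG : forall a, ev (G a) (\row_j w 0 (lift k j)) = ev (F' a) w.
      by move=> a; exact: param_ev.
    exists (\row_j w 0 (lift k j)); split.
      by move=> a a' aa; rewrite !eG; apply: g.
    by rewrite -pw; apply/ffunP => -[a a']; rewrite !ffunE !eG.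
  case: (set_0Vmem [set P' in S' | b \in K P']) => [->|[P' HP']]; first by rewrite cards0.
  exfalso; move: HP'; rewrite !inE => /andP [_] /asboolP [w [_ _ ew]].
  have Hh := hyp w ew.
  have v0 : forall w' : 'rV[R]_d.+1, \sum_j v 0 j * w' 0 j = 0.
    move=> w'; apply: big1 => j _; have := nv j; rewrite /= => /negbFE /eqP ->.
    by rewrite mul0r.
  rewrite v0 addr0 in Hh.
  have := g0 z (lift z b) (neq_lift z b).
  by rewrite -subr_eq0 evcv v0 addr0 Hh eqxx.
have E1 : #|S| = (\sum_(P' in S') #|[set P in S | rho P == P']|)%N.
  rewrite -sum1_card (partition_big_imset rho); apply: eq_bigr => P' _.
  by rewrite -sum1_card; apply: eq_bigl => P; rewrite inE.
have E2 : (\sum_(P' in S') #|K P'| = \sum_(b < n) #|[set P' in S' | b \in K P']|)%N.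
  transitivity (\sum_(P' in S') \sum_(b < n) ((b \in K P') : nat))%N.
    apply: eq_bigr => P' _; rewrite -sum1_card big_mkcond /=.
    by apply: eq_bigr => b _; case: (b \in K P').
  rewrite exchange_big /=; apply: eq_bigr => b _.
  rewrite -sum1_card (eq_bigl (fun P' => (P' \in S') && (b \in K P'))); last first.
    by move=> P'; rewrite inE.
  by rewrite big_mkcondr /=; apply: eq_bigr => P' _; case: (b \in K P').
rewrite E1; apply: leq_trans (pb_rec n d).
have L1 : (\sum_(P' in S') #|[set P in S | rho P == P']| <=
    \sum_(P' in S') (1 + #|K P'|))%N.
  by apply: leq_sum => P' _; rewrite add1n fib_bound.
apply: leq_trans L1 _.
rewrite big_split /= sum1_card E2.
apply: leq_add; first exact: IH HS'.
have L2 : (\sum_(b < n) #|[set P' in S' | b \in K P']| <= \sum_(b < n) pb n d)%N.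
  by apply: leq_sum => b _; exact: T_bound.
apply: leq_trans L2 _.
by rewrite sum_nat_const card_ord.
Qed.

End Geo.

Local Open Scope ring_scope.

Definition Pat A (s : {perm 'I_A}) : {ffun 'I_A * 'I_A -> bool} :=
  [ffun ab => (s ab.1 < s ab.2)%N].

Lemma card_lt A (k : nat) : (k <= A)%N -> #|[set j : 'I_A | (j < k)%N]| = k.
Proof.
move=> kA.
have -> : [set j : 'I_A | (j < k)%N] = [set widen_ord kA i | i : 'I_k].
  apply/setP => j; rewrite inE; apply/idP/imsetP.
    by move=> jk; exists (Ordinal jk) => //; apply: val_inj.
  by case=> i _ ->; rewrite /= ltn_ord.
rewrite card_imset ?card_ord //.
by move=> i j /(congr1 val) /= E; apply: val_inj.
Qed.

Lemma Pat_inj A : injective (@Pat A).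
Proof.
move=> s s' E; apply/permP => a; apply/val_inj.
have key : forall t : {perm 'I_A}, #|[set b | (t b < t a)%N]| = t a.
  move=> t.
  transitivity #|t @^-1: [set j : 'I_A | (j < t a)%N]|.
    by apply: eq_card => b; rewrite !inE.
  by rewrite card_preimset ?card_lt ?(ltnW (ltn_ord _)) //; exact: perm_inj.
rewrite /= -(key s) -(key s'); apply: eq_card => b; rewrite !inE.
by have := congr1 (fun P : {ffun 'I_A * 'I_A -> bool} => P (b, a)) E; rewrite !ffunE.
Qed.

Lemma sqrt_lt (R : realType) (a b : R) : 0 <= a -> 0 <= b ->
  (Num.sqrt a < Num.sqrt b) = (a < b).
Proof.
move=> a0 b0; case: (ltP 0 b) => hb; first exact: ltr_sqrt.
have -> : b = 0 by apply/eqP; rewrite eq_le hb b0.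
by rewrite sqrtr0 !ltNge sqrtr_ge0 a0.
Qed.

Theorem lemma1 (R : realType) (A d r : nat) (profile : seq {perm 'I_A}) :
  (0 < A)%N -> (0 < d)%N -> (d < A - 1)%N ->
  is_max_representable R A d r ->
  (r <= n_unique profile)%N ->
  (r%:R : rat) <= (1 - unif_prob (event_C A d)) * (A`!)%:R.
Proof.
move=> A0 d0 dA [[S0 [Hrep Hc]] _] _.
have [x [w Hr]] := Hrep.
pose F := fun a : 'I_A => ((\sum_k x a 0 k ^+ 2, (-2) *: x a) : aff R d).
have expand : forall a u, \sum_k ((x a - u) 0 k) ^+ 2 = ev (F a) u + \sum_k (u 0 k) ^+ 2.
  move=> a u; rewrite /ev /= -!big_split /=; apply: eq_bigr => k _; rewrite !mxE /=; ring.
have key : forall a b u, (enorm (x a - u) < enorm (x b - u)) = (ev (F a) u < ev (F b) u).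
  move=> a b u; rewrite /enorm sqrt_lt ?sumr_ge0 // ?expand ?ltrD2r //.
    by move=> k _; exact: sqr_ge0.
  by move=> k _; exact: sqr_ge0.
have real : forall P, P \in (@Pat A) @: S0 -> realized F P.
  move=> P /imsetP [s Hs ->]; exists (w s); split.
    move=> a b ab.
    have : s a != s b by rewrite (inj_eq (@perm_inj _ s)).
    rewrite neq_ltn => /orP [] h.
      have := (Hr s Hs a b).1 h; rewrite key => h'; by rewrite lt_eqF.
    have := (Hr s Hs b a).1 h; rewrite key => h'; by rewrite gt_eqF.
  apply/ffunP => -[a b]; rewrite !ffunE /= -key.
  apply/idP/idP => h; [exact: ((Hr s Hs a b).2 h) | exact: ((Hr s Hs a b).1 h)].
have h1 := main real.
rewrite card_imset in h1; last exact: (@Pat_inj A).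
have h2 := V_card A d.
have h3 : V A d \subset ~: event_C A d.
  apply/subsetP => s; rewrite !inE => /forallP H; apply/negP.
  move=> /existsP [i /andP [/andP [_ hi1] hi2]]; have := H i; lia.
have Hle : (r <= #|~: event_C A d|)%N.
  by rewrite -Hc; apply: leq_trans h1 (leq_trans h2 (subset_leq_card h3)).
rewrite /unif_prob card_Sn.
have hC := cardsC (event_C A d); rewrite card_Sn in hC.
have N0 : ((A`!)%:R : rat) != 0 by rewrite pnatr_eq0 -lt0n fact_gt0.
rewrite mulrBl mul1r divfK // -hC natrD.
have -> : (#|event_C A d|%:R + #|~: event_C A d|%:R - #|event_C A d|%:R : rat)
   = #|~: event_C A d|%:R by ring.
by rewrite ler_nat.
Qed.
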